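(* Consider NSGA-III (as defined in the context) on an arbitrary $m$-objective function $f:\{0,1\}^n\to\mathbb N_0^m$ with $\varepsilon_{\mathrm{nad}}\ge f_{\max}$, reference set $\mathcal R_p$ with $p\ge 2m^{3/2}f_{\max}$, and population size $\mu\ge|S|$, where $S$ is a maximum-cardinality set of mutually incomparable solutions of $f$ (any initial population, any rule for choosing extreme points). Then in every generation $t$, for every $x\in F^1_t$ there is $x'\in P_{t+1}$ with $f(x')=f(x)$.
   Context: Let $f=(f_1,\dots,f_m):\{0,1\}^n\to\mathbb N_0^m$ be an $m$-objective function to be maximized, and $f_{\max}:=\max\{f_j(x): x\in\{0,1\}^n, j\in[m]\}$, assumed $\ge 1$. For $x,y\in\{0,1\}^n$: $x\succeq y$ ($x$ weakly dominates $y$) iff $f_j(x)\ge f_j(y)$ for all $j$; $x\succ y$ iff $x\succeq y$ and $f_j(x)>f_j(y)$ for some $j$; $x,y$ are incomparable if neither $x\succeq y$ nor $y\succeq x$. A set $S\subseteq\{0,1\}^n$ is a set of mutually incomparable solutions if any two distinct elements are incomparable. For $p\in\mathbb N$ the reference set is $\mathcal R_p=\{(a_1/p,\dots,a_m/p): (a_1,\dots,a_m)\in\mathbb N_0^m,\ \sum_i a_i=p\}$. NSGA-III with population size $\mu$, threshold $\varepsilon_{\mathrm{nad}}>0$ and reference set $\mathcal R_p$: start with a population $P_0$ (a multiset of $\mu$ bit strings; arbitrary), $E_0=\{(-\infty,\dots,-\infty)\}$, $y^{\max}=(-\infty,\dots,-\infty)$, $y^{\min}=(+\infty,\dots,+\infty)$.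 In generation $t=0,1,2,\dots$: (1) Offspring: $Q_t$ consists of $\mu$ offspring, each created independently by choosing a parent uniformly at random from $P_t$ and flipping each of its bits independently with probability $1/n$. (2) Sorting: $R_t=P_t\cup Q_t$ (multiset of size $2\mu$) is partitioned into layers $F^1_t,\dots,F^k_t$, where $F^1_t$ consists of the members of $R_t$ not dominated (w.r.t. $\succ$) by any member of $R_t$, and $F^i_t$ consists of the members of $R_t\setminus(F^1_t\cup\dots\cup F^{i-1}_t)$ not dominated by any member of that set. Let $i^*$ be the index with $\sum_{i<i^*}|F^i_t|<\mu\le\sum_{i\le i^*}|F^i_t|$, and $Y_t=\bigcup_{i<i^*}F^i_t$. (3) Normalization: for each $j$, set $y^{\min}_j\leftarrow\min(y^{\min}_j,\min_{x\in R_t}f_j(x))$ and $y^{\max}_j\leftarrow\max(y^{\max}_j,\max_{x\in F^1_t}f_j(x))$ (so these are running extremes over all generations so far), and choose an extreme point $e^{(j)}\in f(Y_t\cup F^{i^*}_t)\cup E_t$ by some fixed rule (originally via an achievement scalarization function); set $E_{t+1}=\{e^{(1)},\dots,e^{(m)}\}$. If $e^{(1)},\dots,e^{(m)}$ are linearly independent, let $H$ be the affine hyperplane through them; if for every $j$ the hyperplane $H$ meets the $j$-th coordinate axis in exactly one point $I_j u_j$ ($u_j$ the $j$-th unit vector) with $\varepsilon_{\mathrm{nad}}\le I_j\le y^{\max}_j$, set $y^{\mathrm{nad}}_j=I_j$ for all $j$. Otherwise (including linear dependence) set $y^{\mathrm{nad}}_j=\max_{x\in F^1_t}f_j(x)$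 for all $j$. Afterwards, for every $j$ with $y^{\mathrm{nad}}_j<y^{\min}_j+\varepsilon_{\mathrm{nad}}$, reset $y^{\mathrm{nad}}_j=\max_{x\in R_t}f_j(x)$. The normalized objectives are $f^n_j(x)=(f_j(x)-y^{\min}_j)/(y^{\mathrm{nad}}_j-y^{\min}_j)$ (with the convention $f^n_j(x):=0$ if the denominator is $0$), $f^n=(f^n_1,\dots,f^n_m)$. (4) Association: each $x\in Y_t\cup F^{i^*}_t$ is associated with a reference point $\mathrm{rp}(x)\in\mathcal R_p$ minimizing the Euclidean distance from $f^n(x)$ to the line $\{\lambda r:\lambda\in\mathbb R\}$ (equivalently, minimizing the angle between $f^n(x)$ and $r$); ties are broken by a deterministic rule depending only on $f^n(x)$. (5) Selection: let $\rho_r=|\{x\in Y_t:\mathrm{rp}(x)=r\}|$ for $r\in\mathcal R_p$, $\tilde F=\emptyset$, $R'=\mathcal R_p$. Repeat: choose $r\in R'$ with minimal $\rho_r$ (ties uniformly at random); if some $x\in F^{i^*}_t\setminus\tilde F$ has $\mathrm{rp}(x)=r$, add to $\tilde F$ such an $x$ minimizing the distance between $f^n(x)$ and $r$ (ties uniformly at random), increase $\rho_r$ by one, and stop as soon as $|Y_t|+|\tilde F|=\mu$; otherwise remove $r$ from $R'$. Set $P_{t+1}=Y_t\cup\tilde F$. *)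

(* Defs.v *)
From HB Require Import structures.
From mathcomp Require Import all_boot all_order all_algebra.
From mathcomp Require Import reals.
Set Implicit Arguments. Unset Strict Implicit. Unset Printing Implicit Defensive.
Import Order.TTheory GRing.Theory Num.Theory.

Definition bs (n : nat) := {ffun 'I_n -> bool}.

Section Combinatorial.
Variables (n m : nat) (f : bs n -> 'I_m -> nat).

Definition wdom (x y : bs n) : bool := [forall j, f y j <= f x j].
Definition sdom (x y : bs n) : bool := wdom x y && [exists j, f y j < f x j].

Definition incomparable_set (S : {set bs n}) : Prop :=
  forall x y, x \in S -> y \in S -> x != y -> ~~ wdom x y /\ ~~ wdom y x.

Definition fmax : nat := \max_(x : bs n) \max_(j < m) f x j.

(* non-dominated sorting of a multiset given as an indexed family g *)
Variables (N : nat) (g : 'I_N -> bs n).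
Definition front (A : {set 'I_N}) : {set 'I_N} :=
  [set i in A | [forall k in A, ~~ sdom (g k) (g i)]].
Fixpoint remaining (k : nat) : {set 'I_N} :=
  if k is k'.+1 then remaining k' :\: front (remaining k') else setT.
(* layer k = F^{k+1} in the paper's 1-based numbering *)
Definition layer (k : nat) : {set 'I_N} := front (remaining k).
(* union of layers 0..k-1, i.e. F^1 u ... u F^k *)
Definition below (k : nat) : {set 'I_N} := ~: remaining k.
End Combinatorial.

(* R_t = P_t u Q_t as a family indexed by 'I_(mu+mu) *)
Definition Rpop (n mu : nat) (Pt Qt : 'I_mu -> bs n) (i : 'I_(mu + mu)) : bs n :=
  match split i with inl a => Pt a | inr b => Qt b end.

(* reference points: a : 'I_m -> {0..p} with sum p, representing a/p *)
Definition refT (m p : nat) := {ffun 'I_m -> 'I_p.+1}.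
Definition refset (m p : nat) : {set refT m p} :=
  [set a : refT m p | \sum_j (a j : nat) == p].

Section Real.
Variable R : realType.
Local Open Scope ring_scope.
Variables (n m p : nat) (f : bs n -> 'I_m -> nat).

Definition rvec (a : refT m p) : 'rV[R]_m := \row_j ((a j : nat)%:R / p%:R).
Definition norm2 (v : 'rV[R]_m) : R := \sum_j v ord0 j ^+ 2.
Definition closer_line (v r r' : 'rV[R]_m) : Prop :=
  forall l' : R, exists l : R, norm2 (v - l *: r) <= norm2 (v - l' *: r').
(* deterministic association rule depending only on f^n(x) *)
Definition assoc_ok (assoc : 'rV[R]_m -> refT m p) : Prop :=
  forall v, assoc v \in refset m p /\
    forall r', r' \in refset m p -> closer_line v (rvec (assoc v)) (rvec r').

(* hyperplane through extreme points ev 0, ..., ev (m-1) *)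
Definition Emx (ev : 'I_m -> 'I_m -> nat) : 'M[R]_m := \matrix_(i, k) (ev i k)%:R.
Definition onH (ev : 'I_m -> 'I_m -> nat) (y : 'rV[R]_m) : Prop :=
  exists c : 'rV[R]_m, \sum_i c ord0 i = 1 /\ y = c *m Emx ev.
Definition intercept ev (j : 'I_m) (I : R) : Prop := onH ev (I *: delta_mx ord0 j).
Definition good_hyp ev (ymax : 'I_m -> R) (eps : R) : Prop :=
  row_free (Emx ev) /\
  forall j, (exists! I, intercept ev j I) /\ (forall I, intercept ev j I -> eps <= I <= ymax j).

(* extreme points: None encodes the point (-oo,...,-oo) *)
Definition nad_ok (E1 : 'I_m -> option ('I_m -> nat)) (ymin ymax maxF1 maxR : 'I_m -> R)
    (eps : R) (nad : 'I_m -> R) : Prop :=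
  exists nad0 : 'I_m -> R,
   ((exists ev, (forall j, E1 j = Some (ev j)) /\ good_hyp ev ymax eps /\
                forall j, intercept ev j (nad0 j)) \/
    (~ (exists ev, (forall j, E1 j = Some (ev j)) /\ good_hyp ev ymax eps) /\
     forall j, nad0 j = maxF1 j)) /\
   forall j, nad j = if nad0 j < ymin j + eps then maxR j else nad0 j.

Definition fnorm (ymin nad : 'I_m -> R) (x : bs n) : 'rV[R]_m :=
  \row_j (if nad j - ymin j == 0 then 0 else ((f x j)%:R - ymin j) / (nad j - ymin j)).

(* the selection loop (step 5) as an inductive relation:
   sel rho Ft R' Fin : starting from counters rho, chosen set Ft, available
   reference points R', the loop may terminate with chosen set Fin. *)
Section Sel.
Variables (mu N : nat) (Y Fi : {set 'I_N}) (rp : 'I_N -> refT m p) (vn : 'I_N -> 'rV[R]_m).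
Inductive sel : (refT m p -> nat) -> {set 'I_N} -> {set refT m p} -> {set 'I_N} -> Prop :=
| sel_stop (rho : refT m p -> nat) (Ft : {set 'I_N}) (Rp' : {set refT m p}) (r : refT m p) (x : 'I_N) :
    r \in Rp' -> (forall r', r' \in Rp' -> (rho r <= rho r')%N) ->
    x \in Fi :\: Ft -> rp x = r ->
    (forall x', x' \in Fi :\: Ft -> rp x' = r -> norm2 (vn x - rvec r) <= norm2 (vn x' - rvec r)) ->
    (#|Y| + #|x |: Ft|)%N = mu ->
    sel rho Ft Rp' (x |: Ft)
| sel_add (rho : refT m p -> nat) (Ft : {set 'I_N}) (Rp' : {set refT m p}) (r : refT m p) (x : 'I_N) (Fin : {set 'I_N}) :
    r \in Rp' -> (forall r', r' \in Rp' -> (rho r <= rho r')%N) ->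
    x \in Fi :\: Ft -> rp x = r ->
    (forall x', x' \in Fi :\: Ft -> rp x' = r -> norm2 (vn x - rvec r) <= norm2 (vn x' - rvec r)) ->
    (#|Y| + #|x |: Ft|)%N <> mu ->
    sel (fun r' => if r' == r then (rho r).+1 else rho r') (x |: Ft) Rp' Fin ->
    sel rho Ft Rp' Fin
| sel_remove (rho : refT m p -> nat) (Ft : {set 'I_N}) (Rp' : {set refT m p}) (r : refT m p) (Fin : {set 'I_N}) :
    r \in Rp' -> (forall r', r' \in Rp' -> (rho r <= rho r')%N) ->
    (forall x, x \in Fi :\: Ft -> rp x <> r) ->
    sel rho Ft (Rp' :\ r) Fin ->
    sel rho Ft Rp' Fin.
End Sel.

(* one generation, steps (2)-(5), given offspring Qt; ymin/ymax are the
   already-updated running extremes *)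
Definition gen_step (mu : nat) (eps : R) (assoc : 'rV[R]_m -> refT m p)
    (Pt Qt : 'I_mu -> bs n) (E0 E1 : 'I_m -> option ('I_m -> nat))
    (ymin ymax : 'I_m -> R) (Pt1 : 'I_mu -> bs n) : Prop :=
  let g := Rpop Pt Qt in
  exists istar : nat,
   (#|below f g istar| < mu <= #|below f g istar.+1|)%N /\
   let Y := below f g istar in
   let Fi := layer f g istar in
   (forall j, (exists i, i \in Y :|: Fi /\ E1 j = Some (f (g i))) \/ (exists k, E1 j = E0 k)) /\
   exists nad : 'I_m -> R,
     nad_ok E1 ymin ymax (fun j => (\max_(i in layer f g 0) f (g i) j)%:R)
                         (fun j => (\max_i f (g i) j)%:R) eps nad /\
     let vn i := fnorm ymin nad (g i) in
     let rp i := assoc (vn i) in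
     exists Ft : {set 'I_(mu + mu)},
       sel mu Y Fi rp vn (fun r => #|[set x in Y | rp x == r]|) set0 (refset m p) Ft /\
       exists sigma : 'I_mu -> 'I_(mu + mu),
         injective sigma /\ sigma @: setT = Y :|: Ft /\ forall i, Pt1 i = g (sigma i).

Definition ymin_run (mu : nat) (P Q : nat -> 'I_mu -> bs n) (t : nat) (j : 'I_m) : R :=
  (\big[minn/fmax f]_(s < t.+1) \big[minn/fmax f]_(i : 'I_(mu + mu)) f (Rpop (P s) (Q s) i) j)%:R.
Definition ymax_run (mu : nat) (P Q : nat -> 'I_mu -> bs n) (t : nat) (j : 'I_m) : R :=
  (\max_(s < t.+1) \max_(i in layer f (Rpop (P s) (Q s)) 0) f (Rpop (P s) (Q s) i) j)%:R.

(* a possible run of NSGA-III: P 0 arbitrary; Q t in the support of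
   standard bit-wise mutation (bit-flip probability 1/n); E t = E_t *)
Definition nsga3_run (mu : nat) (eps : R) (assoc : 'rV[R]_m -> refT m p)
    (P Q : nat -> 'I_mu -> bs n) (E : nat -> 'I_m -> option ('I_m -> nat)) : Prop :=
  (forall j, E 0%N j = None) /\
  forall t : nat,
    (forall i, exists (k : 'I_mu) (flips : {set 'I_n}),
        Q t i = [ffun b => P t k b (+) (b \in flips)] /\ (n = 1%N -> flips = setT)) /\
    gen_step eps assoc (P t) (Q t) (E t) (E t.+1)
             (ymin_run P Q t) (ymax_run P Q t) (P t.+1).
End Real.

(* Main.v *)
Require Import Defs.
From HB Require Import structures.
From mathcomp Require Import all_boot all_order all_algebra.
From mathcomp Require Import reals.
From mathcomp Require Import ring lra zify.
Import Order.TTheory GRing.Theory Num.Theory.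
Local Open Scope ring_scope.

Lemma round_ref (R : realType) m p (q : 'I_m -> R) :
  (forall j, 0 <= q j) -> \sum_j q j = p%:R ->
  exists a : refT m p, a \in refset m p /\ forall j, (q j - (a j : nat)%:R)^+2 < 1.
Proof.
move=> q0 qs.
pose Q k := \sum_(j < m | (j < k)%N) q j.
pose N k := Num.truncn (Q k).
have Q0 k : 0 <= Q k by apply: sumr_ge0.
have Qmon k l : (k <= l)%N -> Q k <= Q l.
  move=> kl; rewrite /Q (bigID (fun j : 'I_m => (j < k)%N) (fun j : 'I_m => (j < l)%N)) /=.
  rewrite -[X in X <= _]addr0 lerD //; last by apply: sumr_ge0.
  rewrite le_eqVlt; apply/orP; left; apply/eqP; apply: eq_bigl => j.
  by case: (ltnP j k) => jk; rewrite ?andbT ?andbF //= (leq_trans jk kl).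
have Nmon k l : (k <= l)%N -> (N k <= N l)%N by move=> kl; apply: le_truncn; apply: Qmon.
have Qm : Q m = p%:R by rewrite /Q -qs; apply: eq_bigl => j; rewrite ltn_ord.
have Nm : N m = p by rewrite /N Qm natrK.
have N0 : N 0 = 0%N by rewrite /N /Q big_pred0 // truncn0.
have QS (j : 'I_m) : Q j.+1 = Q j + q j.
  rewrite /Q (bigD1 j) //= addrC; congr (_ + _); apply: eq_bigl => i.
  by rewrite ltnS -val_eqE /= ltn_neqAle andbC.
have aP (j : 'I_m) : (N j.+1 - N j < p.+1)%N.
  rewrite ltnS (leq_trans (leq_subr _ _)) // -Nm Nmon //.
exists [ffun j => Ordinal (aP j)]; split.
  rewrite inE; apply/eqP.
  under eq_bigr => j _ do rewrite ffunE /=.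
  rewrite -(big_mkord xpredT (fun k => N k.+1 - N k)%N) /= telescope_sumn ?Nm ?N0 ?subn0 //.
move=> j; rewrite ffunE /= natrB ?Nmon //.
have := truncn_itv (Q0 j.+1); have := truncn_itv (Q0 j).
rewrite QS /N QS => /andP[h1 h2] /andP[h3 h4].
rewrite -!natr1 in h2 h4.
nra.
Qed.

Lemma norm2_ge0 (R : realType) m (v : 'rV[R]_m) : 0 <= norm2 v.
Proof. by apply: sumr_ge0 => j _; apply: sqr_ge0. Qed.

Lemma near_line (R : realType) m p (F : nat) (assoc : 'rV[R]_m -> refT m p) :
  assoc_ok assoc -> (0 < p)%N -> 4%:R * m%:R^+3 * F%:R^+2 <= p%:R^+2 :> R ->
  forall w : 'rV[R]_m, (forall j, 0 <= w ord0 j <= 1) -> 0 < \sum_j w ord0 j ->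
  exists l, 4%:R * F%:R^+2 * norm2 (w - l *: rvec R (assoc w)) < 1.
Proof.
move=> Has p0 Hp w w01 s0.
set s := \sum_j w ord0 j in s0.
have pR : 0 < p%:R :> R by rewrite ltr0n.
pose q j := p%:R * w ord0 j / s.
have q0 j : 0 <= q j.
  rewrite /q divr_ge0 ?(ltW s0) // mulr_ge0 ?(ltW pR) //; by case/andP: (w01 j).
have qs : \sum_j q j = p%:R.
  by rewrite /q -mulr_suml -mulr_sumr -/s mulfK // gt_eqF.
have [a [ain aq]] := @round_ref R m p q q0 qs.
have [_ Hcl] := Has w.
have [l Hl] := Hcl a ain s.
exists l.
have sm : s <= m%:R.
  have -> : m%:R = \sum_(j < m) (1 : R) by rewrite sumr_const card_ord.
  rewrite /s; apply: ler_sum => j _; by case/andP: (w01 j).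
have m0 : (0 < m)%N.
  rewrite lt0n; apply/eqP => m0; move: s0; rewrite /s big1 ?ltxx // => j _.
  by have := ltn_ord j; rewrite {2}m0.
have key : p%:R^+2 * norm2 (w - s *: rvec R a) < m%:R * s^+2.
  have -> : m%:R * s^+2 = \sum_(j < m) s^+2 by rewrite sumr_const card_ord mulr_natl.
  rewrite /norm2 mulr_sumr.
  rewrite (bigD1 (Ordinal m0)) //= [X in _ < X](bigD1 (Ordinal m0)) //=.
  have T j : p%:R ^+ 2 * ((w - s *: rvec R a) ord0 j)^+2 = s^+2 * (q j - (a j : nat)%:R)^+2.
    rewrite !mxE /q; field; by rewrite !gt_eqF.
  apply: ltr_leD.
    by rewrite T -[X in _ < X]mulr1 ltr_pM2l ?aq // exprn_gt0.
  apply: ler_sum => j _; rewrite T -[X in _ <= X]mulr1 ler_wpM2l ?sqr_ge0 //.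
  exact: ltW (aq j).
have X0 := @norm2_ge0 R m (w - s *: rvec R a).
have Y0 := @norm2_ge0 R m (w - l *: rvec R (assoc w)).
set X := norm2 _ in key X0 Hl.
set Y := norm2 _ in Y0 Hl *.
have F0 : 0 <= F%:R :> R by rewrite ler0n.
have : p%:R^+2 * (4%:R * F%:R ^+ 2 * Y) < p%:R^+2 * 1.
  have h1 : 4%:R * F%:R ^+ 2 * (p%:R^+2 * Y) <= 4%:R * F%:R ^+ 2 * (m%:R * s^+2).
    apply: ler_wpM2l; first by rewrite mulr_ge0 ?sqr_ge0.
    apply: ltW; apply: le_lt_trans key; apply: ler_wpM2l => //; exact: sqr_ge0.
  have h2 : 4%:R * F%:R ^+ 2 * (m%:R * s^+2) <= 4%:R * m%:R^+3 * F%:R ^+ 2.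
    have : s^+2 <= m%:R^+2 by rewrite ler_sqr ?nnegrE ?(ltW s0) ?ler0n.
    have m0' : 0 <= m%:R :> R by rewrite ler0n.
    move=> h; have -> : 4%:R * m%:R^+3 * F%:R ^+ 2 = 4%:R * F%:R ^+ 2 * (m%:R * m%:R^+2) :> R by ring.
    apply: ler_wpM2l; first by rewrite mulr_ge0 ?sqr_ge0.
    exact: ler_wpM2l.
  case: (posnP F) => [->|Fp].
    by rewrite mulr0n expr0n /= mulr0 mul0r mulr0 mulr1 exprn_gt0.
  have : 4%:R * F%:R ^+ 2 * (p%:R^+2 * Y) < 4%:R * F%:R ^+ 2 * (m%:R * s^+2).
    rewrite ltr_pM2l; first by apply: le_lt_trans key; apply: ler_wpM2l => //; exact: sqr_ge0.
    by rewrite mulr_gt0 ?ltr0n // exprn_gt0 // ltr0n.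
  move=> h3; rewrite mulr1; lra.
by rewrite ltr_pM2l // exprn_gt0.
Qed.

Lemma coord_norm2 (R : realType) m (v : 'rV[R]_m) j : (v ord0 j)^+2 <= norm2 v.
Proof.
rewrite /norm2 (bigD1 j) //= lerDl; apply: sumr_ge0 => i _; exact: sqr_ge0.
Qed.

Lemma geo_distinct (R : realType) m p (F : nat) (assoc : 'rV[R]_m -> refT m p) :
  assoc_ok assoc -> (0 < p)%N -> 4%:R * m%:R^+3 * F%:R^+2 <= p%:R^+2 :> R -> (0 < F)%N ->
  forall u v : 'rV[R]_m, (forall j, 0 <= u ord0 j <= 1) -> (forall j, 0 <= v ord0 j <= 1) ->
  forall j k, F%:R^-1 <= u ord0 j - v ord0 j -> F%:R^-1 <= v ord0 k - u ord0 k ->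
  assoc u != assoc v.
Proof.
move=> Has p0 Hp F0 u v u01 v01 j k Hj Hk.
have FR : 0 < F%:R :> R by rewrite ltr0n.
have Fi : 0 < F%:R^-1 :> R by rewrite invr_gt0.
have spos (w : 'rV[R]_m) i : (forall j, 0 <= w ord0 j <= 1) -> F%:R^-1 <= w ord0 i ->
    0 < \sum_j w ord0 j.
  move=> w01 wi; rewrite (bigD1 i) //=; apply: (lt_le_trans Fi); apply: (le_trans wi).
  rewrite lerDl; apply: sumr_ge0 => l _; by case/andP: (w01 l).
have uj : F%:R^-1 <= u ord0 j by case/andP: (v01 j) => h _; lra.
have vk : F%:R^-1 <= v ord0 k by case/andP: (u01 k) => h _; lra.
have [l1 H1] := @near_line R m p F assoc Has p0 Hp u u01 (spos _ _ u01 uj).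
have [l2 H2] := @near_line R m p F assoc Has p0 Hp v v01 (spos _ _ v01 vk).
apply/eqP => E; rewrite E in H1.
set r := rvec R (assoc v) in H1 H2.
have r0 i : 0 <= r ord0 i by rewrite mxE divr_ge0 ?ler0n.
clearbody r.
have co (w : 'rV[R]_m) l i : 4%:R * F%:R^+2 * norm2 (w - l *: r) < 1 ->
    2%:R * F%:R * (w ord0 i - l * r ord0 i) < 1 /\ - 1 < 2%:R * F%:R * (w ord0 i - l * r ord0 i).
  move=> h; have := @coord_norm2 R m (w - l *: r) i; rewrite !mxE => h'.
  set e := w ord0 i - l * r ord0 i in h' *.
  have h'' : (2%:R * F%:R * e)^+2 < 1.
    apply: le_lt_trans h.
    have -> : (2%:R * F%:R * e)^+2 = 4%:R * F%:R^+2 * e^+2 :> R by ring.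
    apply: ler_wpM2l => //; first by have := sqr_ge0 (F%:R : R); nra.
  by split; nra.
have [a1 b1] := co _ _ j H1; have [a2 b2] := co _ _ j H2.
have [a3 b3] := co _ _ k H1; have [a4 b4] := co _ _ k H2.
have Fj : 1 <= F%:R * (u ord0 j - v ord0 j).
  by have := ler_wpM2l (ltW FR) Hj; rewrite mulfV // gt_eqF.
have Fk : 1 <= F%:R * (v ord0 k - u ord0 k).
  by have := ler_wpM2l (ltW FR) Hk; rewrite mulfV // gt_eqF.
have X1 : 0 < F%:R * ((l1 - l2) * r ord0 j).
  have -> : F%:R * ((l1 - l2) * r ord0 j) = F%:R * (u ord0 j - v ord0 j)
     - (2%:R * F%:R * (u ord0 j - l1 * r ord0 j)) / 2%:R + (2%:R * F%:R * (v ord0 j - l2 * r ord0 j)) / 2%:R :> R by field.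
  lra.
have X2 : 0 < F%:R * ((l2 - l1) * r ord0 k).
  have -> : F%:R * ((l2 - l1) * r ord0 k) = F%:R * (v ord0 k - u ord0 k)
     - (2%:R * F%:R * (v ord0 k - l2 * r ord0 k)) / 2%:R + (2%:R * F%:R * (u ord0 k - l1 * r ord0 k)) / 2%:R :> R by field.
  lra.
rewrite pmulr_rgt0 // in X1; rewrite pmulr_rgt0 // in X2.
case: (leP l1 l2) => h.
  have : (l1 - l2) * r ord0 j <= 0 by apply: mulr_le0_ge0 => //; lra.
  lra.
have : (l2 - l1) * r ord0 k <= 0 by apply: mulr_le0_ge0 => //; lra.
lra.
Qed.

Lemma inj_setU1 (T U : finType) (h : T -> U) (x : T) (A : {set T}) :
  h x \notin h @: A -> {in A &, injective h} -> {in x |: A &, injective h}.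
Proof.
move=> hx inj y z; rewrite !inE => /predU1P[->|yA] /predU1P[->|zA] //.
- by move=> e; move: hx; rewrite e imset_f.
- by move=> e; move: hx; rewrite -e imset_f.
- exact: inj.
Qed.

Section SelLemmas.
Variables (R : realType) (m p mu N : nat) (Y Fi : {set 'I_N}) (rp : 'I_N -> refT m p)
  (vn : 'I_N -> 'rV[R]_m).

Lemma sel_sub [rho Ft Rp Fin] : sel mu Y Fi rp vn rho Ft Rp Fin -> Ft \subset Fin.
Proof.
elim=> {rho Ft Rp Fin}.
- by move=> *; exact: subsetUr.
- move=> rho Ft Rp r x Fin _ _ _ _ _ _ _ IH; exact: subset_trans (subsetUr _ _) IH.
- by [].
Qed.

Lemma sel_main : forall rho Ft Rp Fin, sel mu Y Fi rp vn rho Ft Rp Fin ->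
  (forall r, rho r = #|[set x in Ft | rp x == r]|) -> Ft \subset Fi ->
  (forall r, r \in rp @: Fi -> r \notin Rp -> r \in rp @: Ft) ->
  {in Ft &, injective rp} ->
  forall d, d \in rp @: Fi -> d \notin rp @: Fin ->
  [/\ Fin \subset Fi, {in Fin &, injective rp} & (#|Y| + #|Fin|)%N = mu].
Proof.
have step : forall (rho : refT m p -> nat) (Ft : {set 'I_N}) (Rp : {set refT m p}) (r : refT m p) (x : 'I_N) (d : refT m p), r \in Rp -> (forall r', r' \in Rp -> (rho r <= rho r')%N) ->
   x \in Fi :\: Ft -> rp x = r ->
   (forall r, rho r = #|[set x in Ft | rp x == r]|) ->
   (forall r, r \in rp @: Fi -> r \notin Rp -> r \in rp @: Ft) ->
   d \in rp @: Fi -> d \notin rp @: Ft -> rp x \notin rp @: Ft.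
  move=> rho Ft Rp r x d rR rmin xF rx Hrho Hcov dD dF.
  have dR : d \in Rp by apply: contraT => dR; move: dF; rewrite (Hcov d dD dR).
  have := rmin d dR; rewrite !Hrho.
  have -> : [set x0 in Ft | rp x0 == d] = set0.
    apply/setP => y; rewrite !inE; apply/negP => /andP[yF /eqP yd].
    by move: dF; rewrite -yd imset_f.
  rewrite cards0 leqn0 cards_eq0 => /eqP E; apply/imsetP => [[y yF ye]].
  have : y \in [set x0 in Ft | rp x0 == r] by rewrite inE yF -rx ye eqxx.
  by rewrite E inE.
move=> rho0 Ft0 Rp0 Fin0 H; have sub := sel_sub H; move: H sub.
elim=> {rho0 Ft0 Rp0 Fin0}.
- move=> rho Ft Rp r x rR rmin xF rx xl cnt _ Hrho sFt Hcov inj d dD dF.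
  have dF' : d \notin rp @: Ft by apply: contra dF; apply: (subsetP (imsetS rp (subsetUr [set x] Ft))).
  have nx := step _ _ _ _ _ _ rR rmin xF rx Hrho Hcov dD dF'.
  split => //.
  + by rewrite subUset sub1set sFt andbT; case/setDP: xF.
  + exact: inj_setU1.
- move=> rho Ft Rp r x Fin rR rmin xF rx _ _ Hs IH sub Hrho sFt Hcov inj d dD dF.
  have dF' : d \notin rp @: Ft by apply: contra dF; apply: (subsetP (imsetS rp sub)).
  have nx := step _ _ _ _ _ _ rR rmin xF rx Hrho Hcov dD dF'.
  case/setDP: xF => xFi xFt.
  apply: (IH _ _ _ _ _ d dD dF).
  + exact: sel_sub Hs.
  + move=> r'; rewrite Hrho; case: eqP => [->|ne].
      rewrite (_ : [set x0 in x |: Ft | rp x0 == r] = x |: [set x0 in Ft | rp x0 == r]).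
        by rewrite cardsU1 inE (negbTE xFt).
      by apply/setP => y; rewrite !inE; case: eqP => [->|] //=; rewrite rx eqxx.
    rewrite Hrho; apply: eq_card => y; rewrite !inE; case: (eqVneq y x) => [->|] //=.
    by rewrite rx (negbTE xFt); case: eqP => // e; case: ne.
  + by rewrite subUset sub1set xFi.
  + move=> r' r'D r'R; apply: (subsetP (imsetS rp (subsetUr [set x] Ft))); exact: Hcov.
  + exact: inj_setU1.
- move=> rho Ft Rp r Fin rR rmin nox Hs IH sub Hrho sFt Hcov inj d dD dF.
  apply: (IH sub Hrho sFt _ inj d dD dF) => r' r'D.
  rewrite !inE negb_and negbK => /orP[/eqP er|r'R]; last exact: Hcov.
  case/imsetP: r'D => y yFi ey.
  case: (boolP (y \in Ft)) => yFt; first by rewrite ey imset_f.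
  by case: (nox y); rewrite ?inE ?yFt ?yFi // -ey.
Qed.

End SelLemmas.

Lemma sel_subFi (R : realType) (m p mu N : nat) (Y Fi : {set 'I_N}) (rp : 'I_N -> refT m p)
  (vn : 'I_N -> 'rV[R]_m) rho Ft Rp Fin :
  sel mu Y Fi rp vn rho Ft Rp Fin -> Ft \subset Fi -> Fin \subset Fi.
Proof.
elim=> {rho Ft Rp Fin}.
- move=> rho Ft Rp r x _ _ xF _ _ _ sF; case/setDP: xF => xF _.
  by rewrite subUset sub1set xF.
- move=> rho Ft Rp r x Fin _ _ xF _ _ _ _ IH sF; apply: IH; case/setDP: xF => xF _.
  by rewrite subUset sub1set xF.
- by [].
Qed.

Lemma nc01 (R : realType) (y n a : R) : 0 <= y -> y <= a -> a <= n ->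
  0 <= (if n - y == 0 then 0 else (a - y) / (n - y)) <= 1.
Proof.
move=> y0 ya an; case: eqP => [_|ne]; first by rewrite lexx ler01.
have d0 : 0 < n - y by rewrite lt_neqAle eq_sym; apply/andP; split; [apply/eqP|]; lra.
rewrite divr_ge0 ?subr_ge0 //=; last lra.
rewrite ler_pdivrMr // mul1r; lra.
Qed.

Lemma ncdiff (R : realType) (y n a b F : R) : 0 <= y -> y <= b -> a <= n -> n <= F ->
  b + 1 <= a ->
  F^-1 <= (if n - y == 0 then 0 else (a - y) / (n - y)) - (if n - y == 0 then 0 else (b - y) / (n - y)).
Proof.
move=> y0 yb an nF ba.
have d0 : 0 < n - y by lra.
rewrite gt_eqF // -mulrBl.
have -> : a - y - (b - y) = a - b by ring.
have F0 : 0 < F by lra.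
rewrite ler_pdivlMr // mulrC ler_pdivrMr //; nra.
Qed.

Lemma rem_sub n m (f : bs n -> 'I_m -> nat) N (g : 'I_N -> bs n) k :
  remaining f g k.+1 \subset remaining f g 1.
Proof.
elim: k => [|k IH] //; apply: subset_trans IH; exact: subsetDl.
Qed.

Lemma f_le_fmax n m (f : bs n -> 'I_m -> nat) x j : (f x j <= fmax f)%N.
Proof.
rewrite /fmax; apply: leq_trans (leq_bigmax x); exact: (leq_bigmax j).
Qed.

Lemma layer0_diff n m (f : bs n -> 'I_m -> nat) N (g : 'I_N -> bs n) x y :
  x \in layer f g 0 -> (exists j, f (g x) j != f (g y) j) ->
  exists j, (f (g y) j < f (g x) j)%N.
Proof.
rewrite /layer /front inE => /andP[_ /forallP /(_ y) /implyP /(_ (in_setT y)) nd] [j0 ne].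
have : ~~ wdom f (g y) (g x).
  apply: contra nd => w; rewrite /sdom w /=; apply/existsP; exists j0.
  by rewrite ltn_neqAle ne (forallP w j0).
by rewrite /wdom negb_forall => /existsP[j]; rewrite -ltnNge => h; exists j.
Qed.

Lemma bigmin_le (I : finType) (a : nat) (G : I -> nat) x : (\big[minn/a]_(i : I) G i <= G x)%N.
Proof.
have : x \in index_enum I by rewrite mem_index_enum.
elim: (index_enum I) => //= y s IH; rewrite inE big_cons => /predU1P[->|xs].
  exact: geq_minl.
exact: leq_trans (geq_minr _ _) (IH xs).
Qed.

Theorem lemma4 (R : realType) (n m mu p : nat) (f : bs n -> 'I_m -> nat) (eps : R)
    (assoc : 'rV[R]_m -> refT m p)
    (P Q : nat -> 'I_mu -> bs n) (E : nat -> 'I_m -> option ('I_m -> nat)) :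
  (1 <= fmax f)%N ->
  (fmax f)%:R <= eps ->
  2 * m%:R * Num.sqrt (m%:R) * (fmax f)%:R <= p%:R :> R ->
  (exists S : {set bs n}, incomparable_set f S /\
     (forall S' : {set bs n}, incomparable_set f S' -> (#|S'| <= #|S|)%N) /\
     (#|S| <= mu)%N) ->
  assoc_ok assoc ->
  nsga3_run f eps assoc P Q E ->
  forall (t : nat) (i : 'I_(mu + mu)),
    i \in layer f (Rpop (P t) (Q t)) 0 ->
    exists k : 'I_mu, forall j : 'I_m, f (P t.+1 k) j = f (Rpop (P t) (Q t) i) j.
Proof.
move=> HF Heps Hp [S [SI [Smax Smu]]] Has [_ Hrun] t i Hi.
have [_ Hgen] := Hrun t.
set g := Rpop (P t) (Q t) in Hi Hgen *.
case: Hgen => istar [/andP[Hlt Hle] [_ [nad [Hnad [Ft [Hsel [sigma [sinj [sim Hs]]]]]]]]].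
rewrite -/g in Hlt Hle Hnad Hsel sim Hs.
have Hsig : forall x, x \in below f g istar :|: Ft -> exists k, forall j, f (P t.+1 k) j = f (g x) j.
  by move=> x; rewrite -sim => /imsetP[k _ ->]; exists k => j; rewrite Hs.
case: istar Hlt Hle Hsel sim Hsig => [|k] Hlt Hle Hsel sim Hsig; last first.
  apply: Hsig; apply/setUP; left; rewrite /below in_setC; apply/negP => Hk.
  have := subsetP (@rem_sub _ _ f _ g k) _ Hk.
  by rewrite /= in_setD Hi.
set F := fmax f in HF Heps Hp Hnad.
have Y0 : below f g 0 = set0 by rewrite /below /= setCT.
rewrite Y0 in Hsel sim Hsig.
set ymin := ymin_run R f P Q t in Hnad Hsel.
set vn := fun x => fnorm f ymin nad (g x) in Hsel.
set rp := fun x => assoc (vn x) in Hsel.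
have m0 : (0 < m)%N.
  rewrite lt0n; apply/negP => /eqP m0; move: HF; rewrite /F /fmax big1 // => x _.
  by apply: big1 => j _; have := ltn_ord j; rewrite {2}m0.
have Hp2 : 4%:R * m%:R^+3 * F%:R^+2 <= p%:R^+2 :> R.
  have e : (2 * m%:R * Num.sqrt m%:R * F%:R)^+2 = 4%:R * m%:R^+3 * F%:R^+2 :> R.
    by rewrite !exprMn sqr_sqrtr ?ler0n //; ring.
  rewrite -e; have h0 : 0 <= 2 * m%:R * Num.sqrt m%:R * F%:R :> R.
    by rewrite !mulr_ge0 ?ler0n ?sqrtr_ge0.
  move: Hp h0; set x := 2 * _ * _ * _; move=> Hp h0; nra.
have p0 : (0 < p)%N.
  rewrite lt0n; apply/eqP => p0; move: Hp2; rewrite p0 mulr0n expr0n /=.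
  apply/negP; rewrite -ltNge; apply: mulr_gt0; first apply: mulr_gt0.
  - by rewrite ltr0n.
  - by rewrite exprn_gt0 // ltr0n.
  - by rewrite exprn_gt0 // ltr0n.
have ymin0 j : 0 <= ymin j by rewrite ler0n.
have yminle x j : ymin j <= (f (g x) j)%:R.
  rewrite /ymin /ymin_run ler_nat.
  apply: leq_trans (bigmin_le _ _ _ ord_max) _; exact: bigmin_le.
have ymaxF j : ymax_run R f P Q t j <= F%:R.
  rewrite /ymax_run ler_nat; apply/bigmax_leqP => s _; apply/bigmax_leqP => y _.
  exact: f_le_fmax.
have [nad0 [Hcase Hnadeq]] := Hnad.
have nad0F j : nad0 j <= F%:R.
  case: Hcase => [[ev [_ [[_ Hgood] Hint]]] | [_ Hmax]].
    have := (Hgood j).2 _ (Hint j) => /andP[_ h]; exact: le_trans h (ymaxF j).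
  rewrite Hmax ler_nat; apply/bigmax_leqP => y _; exact: f_le_fmax.
have nadF j : nad j <= F%:R.
  rewrite Hnadeq; case: ifP => _ //; rewrite ler_nat; apply/bigmax_leqP => y _; exact: f_le_fmax.
have fle x j : (f (g x) j)%:R <= nad j.
  rewrite Hnadeq; case: ifP => h; first by rewrite ler_nat; exact: (leq_bigmax x).
  move/negbT: h; rewrite -leNgt => h.
  have := ymin0 j; have : (f (g x) j)%:R <= F%:R :> R by rewrite ler_nat f_le_fmax.
  lra.
have coord01 x j : 0 <= vn x ord0 j <= 1.
  by rewrite /vn /fnorm mxE; apply: nc01.
have coorddiff x y j : (f (g y) j < f (g x) j)%N -> F%:R^-1 <= vn x ord0 j - vn y ord0 j.
  move=> lt; rewrite /vn /fnorm !mxE; apply: ncdiff => //.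
  by rewrite natr1 ler_nat.
have fdet x y : (forall j, f (g x) j = f (g y) j) -> rp x = rp y.
  by move=> h; rewrite /rp /vn; congr assoc; apply/rowP => j; rewrite /fnorm !mxE h.
have key x y : x \in layer f g 0 -> y \in layer f g 0 -> rp x = rp y ->
    forall j, f (g x) j = f (g y) j.
  move=> Hx Hy e.
  case: (boolP [forall j, f (g x) j == f (g y) j]) => [/forallP h j|]; first exact/eqP.
  rewrite negb_forall => /existsP ex.
  have ex' : exists j, f (g y) j != f (g x) j by case: ex => j h; exists j; rewrite eq_sym.
  have [j1 h1] := @layer0_diff _ _ f _ g x y Hx ex.
  have [k1 h2] := @layer0_diff _ _ f _ g y x Hy ex'.
  have := @geo_distinct R m p F assoc Has p0 Hp2 HF (vn x) (vn y) (coord01 x) (coord01 y)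
     j1 k1 (coorddiff _ _ _ h1) (coorddiff _ _ _ h2).
  by move: e; rewrite /rp => ->; rewrite eqxx.
set Fi := layer f g 0 in Hsel Hi key.
set D := rp @: Fi.
have Dmu : (#|D| <= mu)%N.
  pose h r := g (odflt i [pick x in Fi | rp x == r]).
  have hP r : r \in D -> exists x, [/\ x \in Fi, rp x = r & h r = g x].
    move=> rD; rewrite /h; case: pickP => [x /andP[xF /eqP xr]|none]; first by exists x.
    by case/imsetP: rD => y yF ry; move: (none y); rewrite yF ry eqxx.
  have hinj : {in D &, injective h}.
    move=> r1 r2 /hP[x1 [_ e1 h1]] /hP[x2 [_ e2 h2]]; rewrite h1 h2 => e.
    by rewrite -e1 -e2 /rp /vn e.
  have SI' : incomparable_set f (h @: D).
    move=> b1 b2 /imsetP[r1 r1D ->] /imsetP[r2 r2D ->] ne.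
    have [x1 [x1F e1 h1]] := hP r1 r1D; have [x2 [x2F e2 h2]] := hP r2 r2D.
    rewrite h1 h2.
    have ex : exists j, f (g x1) j != f (g x2) j.
      apply/existsP; rewrite -negb_forall; apply/negP => /forallP hh.
      move: ne; rewrite h1 h2 (_ : g x1 = g x2) ?eqxx //.
      by rewrite -h1 -h2 -e1 -e2 (fdet x1 x2) // => j; apply/eqP.
    have ex' : exists j, f (g x2) j != f (g x1) j by case: ex => j hh; exists j; rewrite eq_sym.
    have [j1 hj1] := @layer0_diff _ _ f _ g x1 x2 x1F ex.
    have [j2 hj2] := @layer0_diff _ _ f _ g x2 x1 x2F ex'.
    split; rewrite /wdom negb_forall; apply/existsP; [exists j2 | exists j1]; by rewrite -ltnNge.
  by rewrite -(card_in_imset hinj); apply: leq_trans (Smax _ SI') Smu.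
have FtFi := @sel_subFi _ _ _ _ _ _ _ _ _ _ _ _ _ Hsel (sub0set _).
have : rp i \in rp @: Ft.
  apply: contraT => nd.
  have cov : forall r, r \in D -> r \notin refset m p -> r \in rp @: set0.
    by move=> r /imsetP[y _ ->]; rewrite /rp (Has (vn y)).1.
  have inj0 : {in set0 &, injective rp} by move=> y z; rewrite inE.
  have [_ inj card] := @sel_main _ _ _ _ _ _ _ _ _ _ _ _ _ Hsel (fun r => erefl) (sub0set _) cov inj0 (rp i) (imset_f rp Hi) nd.
  rewrite cards0 add0n in card.
  have c1 : #|rp @: Ft| = mu by rewrite (card_in_imset inj).
  have sub : rp @: Ft \subset D :\ rp i.
    apply/subsetP => r /imsetP[y yF ->]; rewrite !inE imset_f ?(subsetP FtFi) // andbT.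
    by apply: contra nd => /eqP <-; apply: imset_f.
  have := subset_leq_card sub; rewrite c1.
  have := cardsD1 (rp i) D; rewrite imset_f //.
  move: Dmu; lia.
case/imsetP => x xFt ex.
have xin : x \in set0 :|: Ft by rewrite set0U.
have [k Hk] := Hsig x xin.
exists k => j; rewrite Hk; apply: key => //; exact: (subsetP FtFi).
Qed.
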